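(* A signed bigraph $\widehat{G}$ is not chordal if and only if it contains a non-trivial induced subgraph which has no signed simplicial edge.
   Context: A signed graph is a finite simple graph each of whose edges is assigned a sign, positive or negative. A signed bigraph is a signed graph whose underlying graph is bipartite. An induced subgraph is obtained by deleting vertices only; it is non-trivial if it has at least one edge. A signed graph is positive if all its edges are positive. In a bigraph with bipartition $(X,Y)$, a subgraph $H$ is a biclique if every vertex of $V(H)\cap X$ is adjacent to every vertex of $V(H)\cap Y$. For an edge $uv$, $N(uv)=(N(u)\cup N(v))\setminus\{u,v\}$; $uv$ is signed simplicial (in the signed bigraph under consideration) if $N(uv)$ induces a positive biclique. A signed bigraph $\widehat G$ is chordal if its edges can be ordered $e_1,\dots,e_m$ so that each $e_i$ is signed simplicial in $\widehat G-\{e_1,\dots,e_{i-1}\}$ (edges deleted, vertices kept). *)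

(* Defs.v *)
From mathcomp Require Import all_boot.
Set Implicit Arguments. Unset Strict Implicit. Unset Printing Implicit Defensive.

(* A signed graph on a finite vertex type T is given by a symmetric,
   irreflexive adjacency relation [a] and a sign relation [s]
   (s x y = true means the edge xy is positive, false negative; only
   its values on edges matter).  Subgraphs are described by a vertex
   set [V : {set T}] (edges of the subgraph induced on V are the
   edges of [a] with both ends in V).  A bipartition is given by
   [X : {set T}] (with Y = complement of X). *)

Section SignedBigraph.
Variable T : finType.

Definition edgeV (V : {set T}) (a : rel T) (x y : T) : bool :=
  [&& x \in V, y \in V & a x y].

Definition Nedge (V : {set T}) (a : rel T) (u v : T) : {set T} :=
  [set w in V | [&& w != u, w != v & edgeV V a u w || edgeV V a v w]].

Definition positive_biclique (a s : rel T) (X S : {set T}) : Prop :=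
  (forall x y, x \in S -> y \in S -> a x y -> s x y) /\
  (forall x y, x \in S -> y \in S -> x \in X -> y \notin X -> a x y).

Definition signed_simplicial (V : {set T}) (a s : rel T) (X : {set T}) (u v : T) : Prop :=
  edgeV V a u v /\ positive_biclique a s X (Nedge V a u v).

Definition del_edges (a : rel T) (es : seq (T * T)) : rel T :=
  fun x y => a x y && ~~ has (fun p => (p == (x, y)) || (p == (y, x))) es.

Definition edge_ordering (a : rel T) (es : seq (T * T)) : Prop :=
  (forall p, p \in es -> a p.1 p.2) /\
  (forall x y, a x y -> count (fun p => (p == (x, y)) || (p == (y, x))) es = 1).

Definition chordal (a s : rel T) (X : {set T}) : Prop :=
  exists es : seq (T * T), edge_ordering a es /\
    forall (es1 : seq (T * T)) (p : T * T) (es2 : seq (T * T)),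
      es = es1 ++ p :: es2 ->
      signed_simplicial [set: T] (del_edges a es1) s X p.1 p.2.

Definition nontrivial (a : rel T) (W : {set T}) : Prop :=
  exists x y, edgeV W a x y.

End SignedBigraph.

(* Main.v *)
Require Import Defs.
From mathcomp Require Import all_boot.
From Stdlib Require Import Classical.
Set Implicit Arguments. Unset Strict Implicit. Unset Printing Implicit Defensive.

Section Aux.
Variable T : finType.
Variables (s : rel T) (X : {set T}).

Definition Pgood (a : rel T) := forall W, nontrivial a W -> exists u v, signed_simplicial W a s X u v.

Lemma ss_sub (W W' : {set T}) (b a : rel T) x y :
  W' \subset W -> (forall p q, p \in W' -> q \in W' -> a p q = b p q) ->
  (forall w, w \in W -> w \notin W' -> ~~ b x w && ~~ b y w) ->
  signed_simplicial W' a s X x y -> signed_simplicial W b s X x y.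
Proof.
move=> sub agr out [he [h1 h2]].
move: (he); rewrite /edgeV => /and3P [hx hy haxy].
have NE : Nedge W b x y = Nedge W' a x y.
  apply/setP => w; rewrite !inE /edgeV.
  case: (boolP (w \in W')) => hw.
    rewrite (subsetP sub _ hw) (subsetP sub _ hx) (subsetP sub _ hy) hx hy /=.
    by rewrite (agr _ _ hx hw) (agr _ _ hy hw).
  rewrite /=.
  case: (boolP (w \in W)) => hwW //=.
  by move: (out w hwW hw) => /andP [/negbTE -> /negbTE ->]; rewrite !andbF.
split.
  by rewrite /edgeV (subsetP sub _ hx) (subsetP sub _ hy) -agr.
rewrite NE; split.
  move=> p q hp hq; move: (hp) (hq); rewrite !inE => /andP [hpW _] /andP [hqW _].
  by rewrite -agr //; apply: h1.
move=> p q hp hq hpX hqX; move: (hp) (hq); rewrite !inE => /andP [hpW _] /andP [hqW _].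
by rewrite -agr //; apply: h2.
Qed.

Lemma ss_swap (W : {set T}) (a : rel T) x y : symmetric a ->
  signed_simplicial W a s X x y -> signed_simplicial W a s X y x.
Proof.
move=> asym [he hb]; split.
  by move: he; rewrite /edgeV => /and3P [h1 h2 h3]; rewrite h1 h2 asym.
have -> : Nedge W a y x = Nedge W a x y.
  by apply/setP => w; rewrite !inE [edgeV W a y w || _]orbC; case: (w \in W); case: (w != x); case: (w != y).
exact: hb.
Qed.

End Aux.

Section Key.
Variable T : finType.
Variables (a s : rel T) (X : {set T}).
Hypotheses (asym : symmetric a) (airr : irreflexive a) (ssym : symmetric s)
  (abip : forall x y, a x y -> (x \in X) != (y \in X)).

Lemma sideXQ x y : a x y -> x \in X -> y \notin X.
Proof. by move=> /abip; case: (x \in X); case: (y \in X). Qed.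
Lemma sideQX x y : a x y -> x \notin X -> y \in X.
Proof. by move=> /abip; case: (x \in X); case: (y \in X). Qed.

Lemma orient W : (exists u v, signed_simplicial W a s X u v) ->
  exists u v, signed_simplicial W a s X u v /\ u \in X.
Proof.
move=> [u [v h]]; case: (boolP (u \in X)) => hu.
  by exists u, v.
exists v, u; split; first exact: ss_swap.
by move: (h) => [he _]; move: he; rewrite /edgeV => /and3P [_ _ /sideQX]; apply.
Qed.

Lemma key u v : u \in X -> signed_simplicial setT a s X u v -> Pgood s X a ->
  Pgood s X (del_edges a [:: (u, v)]).
Proof.
move=> huX hss hP W [x0 [y0 hxy0]].
set a' := del_edges a [:: (u, v)].
have a'E : forall x y, a' x y = a x y && ~~ ((u == x) && (v == y) || (u == y) && (v == x)).
  by move=> x y; rewrite /a' /del_edges /= orbF !xpair_eqE.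
have a'a : forall x y, a' x y -> a x y by move=> x y; rewrite a'E => /andP[].
have a'sym : symmetric a' by move=> x y; rewrite !a'E asym orbC.
have a'eq : forall x y, x != u -> y != u -> a' x y = a x y.
  by move=> x y hx hy; rewrite a'E ![u == _]eq_sym (negbTE hx) (negbTE hy) /= andbT.
have a'vu : a' v u = false by rewrite a'E !eqxx /= orbT andbF.
have a'uv : a' u v = false by rewrite a'sym.
have hauv : a u v by move: (hss) => [he _]; move: he; rewrite /edgeV => /and3P [].
have hvX : v \notin X := sideXQ hauv huX.
have pairfact : forall p q, a' v p -> a' u q -> a p q && s p q.
  move: hss => [_ [hb1 hb2]] p q hp hq.
  have pN : p \in Nedge setT a u v.
    rewrite !inE /edgeV !inE /=; apply/and3P; split.
    - by apply/eqP => e; move: hp; rewrite e a'vu.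
    - by apply/eqP => e; move: (a'a _ _ hp); rewrite e airr.
    - by rewrite (a'a _ _ hp) orbT.
  have qN : q \in Nedge setT a u v.
    rewrite !inE /edgeV !inE /=; apply/and3P; split.
    - by apply/eqP => e; move: (a'a _ _ hq); rewrite e airr.
    - by apply/eqP => e; move: hq; rewrite e a'uv.
    - by rewrite (a'a _ _ hq).
  have pX : p \in X := sideQX (a'a _ _ hp) hvX.
  have qX : q \notin X := sideXQ (a'a _ _ hq) huX.
  have apq := hb2 p q pN qN pX qX.
  by rewrite apq (hb1 p q pN qN apq).
case: (boolP ((u \in W) && (v \in W))) => [/andP [huW hvW] | hnot]; last first.
  have agr : forall p q, p \in W -> q \in W -> a p q = a' p q.
    move=> p q hp hq; rewrite a'E.
    case: (boolP ((u == p) && (v == q) || (u == q) && (v == p))) => h; last by rewrite andbT.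
    by exfalso; case/orP: h => /andP [/eqP e1 /eqP e2]; subst p q; rewrite ?hp ?hq in hnot.
  have hn : nontrivial a W.
    exists x0, y0; move: hxy0; rewrite /edgeV => /and3P [h1 h2 h3].
    by rewrite h1 h2 (a'a _ _ h3).
  move: (hP W hn) => [u1 [v1 h]]; exists u1, v1.
  apply: (ss_sub (W' := W) (a := a)) => //.
  by move=> w ->.
case: (boolP [exists p, (p \in W) && a' v p]) => [/existsP [b0 /andP [hb0W hb0]] | hB]; last first.
  have noB : forall p, p \in W -> a' v p = false.
    move=> p hp; apply/negbTE; apply: contra hB => h; apply/existsP; exists p; by rewrite hp.
  move: hxy0; rewrite /edgeV => /and3P [hx0 hy0 h0].
  change (is_true (a' x0 y0)) in h0.
  have hx0v : x0 != v by apply/eqP => e; move: h0; rewrite e noB.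
  have hy0v : y0 != v by apply/eqP => e; move: h0; rewrite e a'sym noB.
  have hn : nontrivial a (W :\ v).
    by exists x0, y0; rewrite /edgeV !inE hx0v hy0v hx0 hy0 (a'a _ _ h0).
  move: (hP _ hn) => [u1 [v1 h]]; exists u1, v1.
  apply: (ss_sub (W' := W :\ v) (a := a)) => //.
  - by apply/subsetP => w; rewrite inE => /andP [].
  - move=> p q; rewrite !inE => /andP [hpv _] /andP [hqv _].
    by rewrite a'E ![v == _]eq_sym (negbTE hpv) (negbTE hqv) !andbF /= andbT.
  - move=> w hw; rewrite !inE hw andbT negbK => /eqP ->.
    move: (h) => [he _]; move: he; rewrite /edgeV !inE => /and3P [/andP [_ hu1] /andP [_ hv1] _].
    by rewrite !(a'sym _ v) !noB.
pose B := [set p in W | a' v p].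
have inB : forall p, (p \in B) = (p \in W) && a' v p by move=> p; rewrite /B inE.
pose U := [set p in W | (p \in X) && (p \notin B) &&
   [forall q, ((q \in W) && a' p q) ==> [forall b, (b \in B) ==> a b q && s b q]]].
have inU : forall p, (p \in U) = (p \in W) && ((p \in X) && (p \notin B) &&
   [forall q, ((q \in W) && a' p q) ==> [forall b, (b \in B) ==> a b q && s b q]])
  by move=> p; rewrite /U inE.
have UX : forall p, p \in U -> p \in X by move=> p; rewrite inU => /andP [_ /andP [/andP [->]]].
have BU : forall p, p \in B -> p \notin U.
  by move=> p hp; rewrite inU hp /= andbF andbF.
have uU : u \in U.
  rewrite inU huW huX inB a'vu andbF /=.
  apply/forallP => q; apply/implyP => /andP [hqW hq]; apply/forallP => b; apply/implyP.
  by rewrite inB => /andP [_ hb]; exact: pairfact.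
pose W2 := W :\: U.
have inW2 : forall p, (p \in W2) = (p \notin U) && (p \in W) by move=> p; rewrite /W2 inE.
have W2W : forall p, p \in W2 -> p \in W by move=> p; rewrite inW2 => /andP [].
have W2u : forall p, p \in W2 -> p != u.
  by move=> p; rewrite inW2 => /andP [hpU _]; apply: contraNneq hpU => ->.
have agr2 : forall p q, p \in W2 -> q \in W2 -> a p q = a' p q.
  by move=> p q hp hq; rewrite a'eq // W2u.
have hvU : v \notin U by apply: contra hvX; apply: UX.
have hn : nontrivial a W2.
  exists v, b0; rewrite /edgeV !inW2 hvU hvW hb0W (a'a _ _ hb0) /= andbT.
  by rewrite andbT; apply: BU; rewrite inB hb0W.
move: (orient (hP _ hn)) => [x [y [hss2 hxX]]].
move: (hss2) => [he2 [hS1 hS2]]; move: he2; rewrite /edgeV => /and3P [hxW2 hyW2 haxy].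
have hyX : y \notin X := sideXQ haxy hxX.
case: (boolP [exists p, (p \in U) && a' p y]) => [/existsP [p /andP [hpU hpy]] | hnoU]; last first.
  exists x, y; apply: (ss_sub (W' := W2) (a := a)) => //.
  - by apply/subsetP => w /W2W.
  - move=> w hw hwW2.
    have hwU : w \in U by move: hwW2; rewrite inW2 hw andbT negbK.
    apply/andP; split.
      by apply/negP => /a'a hxw; move: (sideXQ hxw hxX); rewrite (UX _ hwU).
    apply/negP => hyw; move: hnoU; rewrite negb_exists => /forallP /(_ w).
    by rewrite hwU a'sym hyw.
have hyB : forall b, b \in B -> a b y && s b y.
  move: hpU; rewrite inU => /andP [_ /andP [_ /forallP H]].
  move: (H y); rewrite (W2W _ hyW2) hpy /= => /forallP H2 b hb.
  by move: (H2 b); rewrite hb.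
have BX : forall r, r \in B -> r \in X.
  by move=> r; rewrite inB => /andP [_ /a'a hvr]; exact: sideQX hvr hvX.
have BW2 : forall r, r \in B -> r \in W2.
  by move=> r hr; rewrite inW2 BU //; move: hr; rewrite inB => /andP [].
have QW2 : forall c, c \in W -> c \notin X -> c \in W2.
  by move=> c hc hcX; rewrite inW2 hc andbT; apply: contra hcX; apply: UX.
have inS : forall r, r \in W2 -> r != x -> r != y -> (a x r || a y r) -> r \in Nedge W2 a x y.
  by move=> r h1 h2 h3 h4; rewrite /Nedge inE h1 h2 h3 /edgeV hxW2 hyW2 h1.
have bS : forall r, r \in B -> r != x -> r \in Nedge W2 a x y.
  move=> r hr hrx; apply: inS => //; first exact: BW2.
    by apply: contraTneq (BX _ hr) => ->.
  by move: (hyB _ hr) => /andP [hry _]; rewrite (asym y r) hry orbT.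
have cS : forall c, c \in W -> c != y -> a x c -> c \in Nedge W2 a x y.
  move=> c hc hcy hxc; apply: inS => //.
  - exact: QW2 hc (sideXQ hxc hxX).
  - by apply: contraTneq hxc => ->; rewrite airr.
  - by rewrite hxc.
case: (boolP (x \in B)) => hxB; last first.
  exfalso.
  have hxU : x \in U.
    rewrite inU (W2W _ hxW2) hxX hxB /=.
    apply/forallP => q; apply/implyP => /andP [hqW hxq]; apply/forallP => b; apply/implyP => hbB.
    case: (eqVneq q y) => [-> | hqy]; first exact: hyB.
    have qS := cS q hqW hqy (a'a _ _ hxq).
    have bS' : b \in Nedge W2 a x y by apply: bS => //; apply: contraNneq hxB => <-.
    have hqX : q \notin X := sideXQ (a'a _ _ hxq) hxX.
    have abq := hS2 b q bS' qS (BX _ hbB) hqX.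
    by rewrite abq (hS1 _ _ bS' qS abq).
  by move: hxW2; rewrite inW2 hxU.
have hxW := W2W _ hxW2.
have Key : forall r c, r \in B -> r != x -> c \in W -> c != v -> a' x c -> a' r c && s r c.
  move=> r c hrB hrx hcW hcv hxc.
  have hcX : c \notin X := sideXQ (a'a _ _ hxc) hxX.
  rewrite -agr2 ?(BW2 _ hrB) ?(QW2 _ hcW hcX) //.
  case: (eqVneq c y) => [-> | hcy]; first exact: hyB.
  have cS' := cS c hcW hcy (a'a _ _ hxc).
  have rS := bS r hrB hrx.
  have arc := hS2 r c rS cS' (BX _ hrB) hcX.
  by rewrite arc (hS1 _ _ rS cS' arc).
have hNX : forall w, w \in Nedge W a' v x -> w \in X -> (w \in B) && (w != x).
  move=> w; rewrite !inE /edgeV => /and4P [_ _ hwx /orP [/and3P [_ hw hvw] | /and3P [_ _ hxw]]] hwX.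
    by rewrite hw hvw hwx.
  by move: (sideXQ (a'a _ _ hxw) hxX); rewrite hwX.
have hNQ : forall w, w \in Nedge W a' v x -> w \notin X -> [&& w \in W, w != v & a' x w].
  move=> w; rewrite !inE /edgeV => /and4P [hw hwv _ /orP [/and3P [_ _ hvw] | /and3P [_ _ hxw]]] hwX.
    by move: (sideQX (a'a _ _ hvw) hvX); rewrite (negbTE hwX).
  by rewrite hw hwv hxw.
exists v, x; split; first by rewrite /edgeV hvW hxW; move: hxB; rewrite inB => /andP [].
split.
  move=> p1 q1 hp hq hpq.
  case: (boolP (p1 \in X)) => hpX.
    have hqX := sideXQ (a'a _ _ hpq) hpX.
    move: (hNX _ hp hpX) (hNQ _ hq hqX) => /andP [hpB hpx] /and3P [hqW hqv hxq].
    by move: (Key _ _ hpB hpx hqW hqv hxq) => /andP [].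
  have hqX := sideQX (a'a _ _ hpq) hpX.
  move: (hNX _ hq hqX) (hNQ _ hp hpX) => /andP [hqB hqx] /and3P [hpW hpv hxp].
  by move: (Key _ _ hqB hqx hpW hpv hxp) => /andP [_]; rewrite ssym.
move=> p1 q1 hp hq hpX hqX.
move: (hNX _ hp hpX) (hNQ _ hq hqX) => /andP [hpB hpx] /and3P [hqW hqv hxq].
by move: (Key _ _ hpB hpx hqW hqv hxq) => /andP [].
Qed.

End Key.

Section Main.
Variable T : finType.
Variables (s : rel T) (X : {set T}).

Lemma easy (a : rel T) : chordal a s X -> Pgood s X a.
Proof.
move=> [es [[hin hcnt] hss]] W [x [y hxy]].
move: hxy; rewrite /edgeV => /and3P [hxW hyW haxy].
pose f := fun p : T * T => (p.1 \in W) && (p.2 \in W).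
have hf : has f es.
  have hc := hcnt x y haxy.
  have : has (fun p => (p == (x, y)) || (p == (y, x))) es by rewrite has_count hc.
  move=> /hasP [p hp /orP [/eqP e | /eqP e]]; apply/hasP; exists p => //; by rewrite /f e /= hxW hyW.
pose i := find f es.
have hi : i < size es by rewrite -has_find.
pose p := nth (x, x) es i.
have hfp : f p := nth_find _ hf.
have hdec : es = take i es ++ p :: drop i.+1 es by rewrite /p -drop_nth // cat_take_drop.
have hbefore : forall q, q \in take i es -> ~~ f q.
  move=> q hq.
  have [j hj ->] : exists2 j, j < size (take i es) & q = nth (x, x) (take i es) j.
    by exists (index q (take i es)); [rewrite index_mem | rewrite nth_index].
  move: hj; rewrite size_take hi => hj.
  by rewrite nth_take // before_find.
move: (hss _ _ _ hdec).
set a1 := del_edges a (take i es).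
have agr : forall z1 z2, z1 \in W -> z2 \in W -> a1 z1 z2 = a z1 z2.
  move=> z1 z2 h1 h2; rewrite /a1 /del_edges.
  have -> : has (fun q => (q == (z1, z2)) || (q == (z2, z1))) (take i es) = false.
    apply/negbTE/hasPn => q hq; apply/negP => /orP [/eqP e | /eqP e];
    by move: (hbefore q hq); rewrite /f e /= h1 h2.
  by rewrite andbT.
move=> [he [hb1 hb2]]; exists p.1, p.2.
move: hfp; rewrite /f => /andP [hp1 hp2].
have hap : a p.1 p.2 by apply: hin; rewrite /p mem_nth.
have NW : forall w, w \in Nedge W a p.1 p.2 -> w \in W by move=> w; rewrite inE => /andP [].
have Nsub : forall w, w \in Nedge W a p.1 p.2 -> w \in Nedge setT a1 p.1 p.2.
  move=> w hw; move: (NW _ hw) => hwW; move: hw.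
  rewrite /Nedge !inE /edgeV => /and4P [_ h1 h2 /orP [/and3P [_ _ h] | /and3P [_ _ h]]];
  rewrite h1 h2 !inE /=.
    by rewrite agr // h.
  by rewrite (agr p.2) // h orbT.
split; first by rewrite /edgeV hp1 hp2 hap.
split.
  move=> z1 z2 hz1 hz2 h; apply: hb1 (Nsub _ hz1) (Nsub _ hz2) _.
  by rewrite agr ?NW.
move=> z1 z2 hz1 hz2 hX1 hX2; rewrite -agr ?NW //.
exact: hb2 (Nsub _ hz1) (Nsub _ hz2) hX1 hX2.
Qed.

Lemma chordal_nil (a : rel T) : (forall x y, ~~ a x y) -> chordal a s X.
Proof.
move=> H; exists [::]; split.
  by split => // x y h; move: (H x y); rewrite h.
by move=> es1 p es2; case: es1.
Qed.

Lemma hard n (a : rel T) : #|[set p : T * T | a p.1 p.2]| <= n -> symmetric a -> irreflexive a ->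
  (forall x y, a x y -> (x \in X) != (y \in X)) -> symmetric s -> Pgood s X a -> chordal a s X.
Proof.
elim: n a => [|n IH] a hcard asym airr abip ssym hP.
  apply: chordal_nil => x y; apply/negP => h.
  move: hcard; rewrite leqn0 cards_eq0 => /eqP E.
  have : (x, y) \in [set p : T * T | a p.1 p.2] by rewrite inE.
  by rewrite E inE.
case: (boolP [exists p : T * T, a p.1 p.2]) => [/existsP [p0 hp0] | hno]; last first.
  apply: chordal_nil => x y; apply/negP => h; move: hno; rewrite negb_exists => /forallP /(_ (x, y)).
  by rewrite h.
have hnt : nontrivial a setT by exists p0.1, p0.2; rewrite /edgeV !inE.
move: (orient asym abip (hP _ hnt)) => [u [v [hss huX]]].
set a' := del_edges a [:: (u, v)].
have hP' : Pgood s X a' by apply: key.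
have a'E : forall x y, a' x y = a x y && ~~ (((u, v) == (x, y)) || ((u, v) == (y, x))).
  by move=> x y; rewrite /a' /del_edges /= orbF.
have a'a : forall x y, a' x y -> a x y by move=> x y; rewrite a'E => /andP [].
have a'sym : symmetric a' by move=> x y; rewrite !a'E asym orbC.
have hauv : a u v by move: (hss) => [he _]; move: he; rewrite /edgeV => /and3P [].
have hpr : [set p : T * T | a' p.1 p.2] \proper [set p : T * T | a p.1 p.2].
  apply/properP; split.
    by apply/subsetP => q; rewrite !inE; apply: a'a.
  by exists (u, v); rewrite !inE /=; [exact: hauv | rewrite a'E eqxx /= andbF].
have hcard' : #|[set p : T * T | a' p.1 p.2]| <= n.
  by rewrite -ltnS (leq_trans (proper_card hpr) hcard).
have airr' : irreflexive a' by move=> x; apply/negbTE/negP => /a'a; rewrite airr.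
have abip' : forall x y, a' x y -> (x \in X) != (y \in X) by move=> x y /a'a /abip.
move: (IH a' hcard' a'sym airr' abip' ssym hP') => [es' [[hin' hcnt'] hss']].
exists ((u, v) :: es'); split; first split.
- move=> q; rewrite in_cons => /orP [/eqP -> | hq] //.
  exact: a'a (hin' q hq).
- move=> x y hxy /=.
  case: (boolP (a' x y)) => h'.
    rewrite (hcnt' x y h'); move: h'; rewrite a'E hxy /= => /negbTE ->.
    by [].
  have -> : ((u, v) == (x, y)) || ((u, v) == (y, x)).
    by move: h'; rewrite a'E hxy /= negbK.
  have -> : count (fun p => (p == (x, y)) || (p == (y, x))) es' = 0.
    apply/eqP; rewrite -leqn0 leqNgt -has_count; apply/hasPn => q hq.
    apply/negP => /orP [/eqP e | /eqP e]; move: (hin' q hq); rewrite e /= => h''.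
      by move: h'; rewrite h''.
    by move: h'; rewrite a'sym h''.
  by [].
- move=> es1 q es2; case: es1 => [|r es1] /= [e1 e2].
    rewrite -e1; apply: (ss_sub (W' := setT) (a := a)) => //.
    + by move=> p1 q1 _ _; rewrite /del_edges /= andbT.
    + by move=> w _; rewrite inE.
  apply: (ss_sub (W' := setT) (a := del_edges a' es1)) => //.
  + move=> p1 q1 _ _; rewrite -e1 /del_edges /= a'E negb_or andbA.
    by rewrite !negb_or !andbA.
  + by move=> w _; rewrite inE.
  exact: hss' e2.
Qed.

End Main.

Theorem corollary5p2 (T : finType) (a s : rel T) (X : {set T}) :
  symmetric a -> irreflexive a -> symmetric s ->
  (forall x y, a x y -> (x \in X) != (y \in X)) ->
  (~ chordal a s X <->
   exists W : {set T}, nontrivial a W /\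
     forall u v, ~ signed_simplicial W a s X u v).
Proof.
move=> asym airr ssym abip; split.
  move=> hnc; apply: NNPP => hno; apply: hnc.
  apply: (@hard T s X _ a (leqnn _)) => // W hW.
  apply: NNPP => hne; apply: hno; exists W; split => // u v hss.
  by apply: hne; exists u, v.
move=> [W [hW hbad]] hch; move: (easy hch hW) => [u [v h]]; exact: hbad u v h.
Qed.
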